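(* Let $G<\operatorname{Aut}(T)$ be the group generated by the automorphisms $a,b,c$ of the $6$-ary rooted tree $T=\{1,\dots,6\}^*$ defined by the wreath recursions $a=\langle\!\langle b^{-1},1,b,c^{-1},1,c\rangle\!\rangle(13)(25)(46)$, $b=\langle\!\langle b,b^{-1},1,c,c^{-1},1\rangle\!\rangle(2356)$, $c=(123)(456)$. Then $G$ is recurrent; consequently $G$ is level-transitive.
   Context: $T$ is the tree of finite words over $X=\{1,\dots,6\}$, rooted at the empty word, each word $v$ joined to $vx$. Automorphisms act on the right. The wreath recursion $g=\langle\!\langle g_1,\dots,g_6\rangle\!\rangle\sigma$ with $g_i\in\operatorname{Aut}(T)$, $\sigma$ a permutation of $X$, means $(xv)^g=x^\sigma v^{g_x}$ for $x\in X$, $v\in X^*$; $g_x=g|_x$ is the restriction (section) of $g$ at $x$. A self-similar group $G$ is recurrent if it acts transitively on $X$ and, for some (equivalently every) $x\in X$, the map $G_x\to G$, $g\mapsto g|_x$, from the stabilizer $G_x=\{g\in G:x^g=x\}$ is onto. Level-transitive means transitive on $X^n$ for all $n$. (This $G$ is $\operatorname{IMG}(f_1)$ for $f_1(z)=\frac{2(z^2-3/4)^3}{z^2(z^2-9/8)^2}-1$.) *)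

(* Defs.v *)
From mathcomp Require Import all_boot.
Set Implicit Arguments. Unset Strict Implicit. Unset Printing Implicit Defensive.

(* Alphabet X = {1,...,6}, encoded as 'I_6 : letter k+1 of the paper is the
   ordinal k. Words of the tree T = X^* are seq X; the root is [::]. *)
Definition X := 'I_6.
Definition lt (k : nat) : X := inord k.

Inductive gen := GA | GB | GC.

(* Permutations sigma_g (right action, x |-> x^sigma), on 0-based labels.
   a : (13)(25)(46)   b : (2356)   c : (123)(456)                         *)
Definition sigma (g : gen) (x : X) : X :=
  match g with
  | GA => lt (nth 0 [:: 2; 4; 0; 5; 1; 3] x)
  | GB => lt (nth 0 [:: 0; 2; 4; 3; 5; 1] x)
  | GC => lt (nth 0 [:: 1; 2; 0; 4; 5; 3] x)
  end.

Definition sigmainv (g : gen) (x : X) : X :=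
  match g with
  | GA => lt (nth 0 [:: 2; 4; 0; 5; 1; 3] x)
  | GB => lt (nth 0 [:: 0; 5; 1; 3; 2; 4] x)
  | GC => lt (nth 0 [:: 2; 0; 1; 5; 3; 4] x)
  end.

(* A letter of the generating set: (g, false) = g, (g, true) = g^{-1}. *)
Definition letter := (gen * bool)%type.

(* Sections g|_x of the generators, as letters (None = identity):
   a = <<b^{-1},1,b,c^{-1},1,c>>, b = <<b,b^{-1},1,c,c^{-1},1>>, c = <<1,...,1>>. *)
Definition sect0 (g : gen) (x : X) : option letter :=
  match g with
  | GA => nth None [:: Some (GB, true); None; Some (GB, false);
                       Some (GC, true); None; Some (GC, false)] x
  | GB => nth None [:: Some (GB, false); Some (GB, true); None;
                       Some (GC, false); Some (GC, true); None] x
  | GC => None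
  end.

(* For g = <<g_1..g_6>> sigma, g^{-1} = <<...>> sigma^{-1} with
   (g^{-1})|_y = (g|_{y^{sigma^{-1}}})^{-1}. *)
Definition perm_l (l : letter) (x : X) : X :=
  if l.2 then sigmainv l.1 x else sigma l.1 x.

Definition sect_l (l : letter) (x : X) : option letter :=
  if l.2 then omap (fun m : letter => (m.1, ~~ m.2)) (sect0 l.1 (sigmainv l.1 x))
  else sect0 l.1 x.

Fixpoint act_l (l : letter) (w : seq X) : seq X :=
  match w with
  | [::] => [::]
  | x :: v => perm_l l x :: match sect_l l x with
                            | None => v
                            | Some m => act_l m v
                            end
  end.

(* Action of a product of letters (right action: apply first letter first). *)
Definition act_w (s : seq letter) (w : seq X) : seq X :=
  foldl (fun u l => act_l l u) w s.

Definition inG (g : seq X -> seq X) : Prop :=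
  exists s : seq letter, forall w, g w = act_w s w.

Definition section (g : seq X -> seq X) (x : X) : seq X -> seq X :=
  fun v => behead (g (x :: v)).

Definition recurrent : Prop :=
  (forall x y : X, exists g, inG g /\ g [:: x] = [:: y]) /\
  exists x : X, forall h, inG h ->
    exists g, inG g /\ g [:: x] = [:: x] /\ forall v, section g x v = h v.

Definition level_transitive : Prop :=
  forall (n : nat) (u v : seq X), size u = n -> size v = n ->
    exists g, inG g /\ g u = v.

(* Main.v *)
Require Import Defs.
From mathcomp Require Import all_boot.

Definition act_opt (o : option letter) (v : seq X) : seq X :=
  match o with None => v | Some m => act_l m v end.

Definition oseq (o : option letter) : seq letter :=
  match o with None => [::] | Some m => [:: m] end.

Definition sw (s : seq letter) (p : X * seq letter) : X * seq letter :=
  foldl (fun p l => (perm_l l p.1, p.2 ++ oseq (sect_l l p.1))) p s.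

Lemma act_w_cat s1 s2 w : act_w (s1 ++ s2) w = act_w s2 (act_w s1 w).
Proof. by rewrite /act_w foldl_cat. Qed.

Lemma act_opt_w o r v : act_opt o (act_w r v) = act_w (r ++ oseq o) v.
Proof. case: o => [m|] /=; by rewrite act_w_cat // cats0. Qed.

Lemma swP s x v r :
  act_w s (x :: act_w r v) = (sw s (x, r)).1 :: act_w (sw s (x, r)).2 v.
Proof.
elim: s x r => [|l s IH] x r //.
transitivity (act_w s (act_l l (x :: act_w r v))); first by [].
have -> : act_l l (x :: act_w r v) = perm_l l x :: act_w (r ++ oseq (sect_l l x)) v.
  by rewrite /= -act_opt_w; case: (sect_l l x).
exact: IH.
Qed.

Lemma swP0 s x v :
  act_w s (x :: v) = (sw s (x, [::])).1 :: act_w (sw s (x, [::])).2 v.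
Proof. exact: (swP s x v [::]). Qed.

Lemma act_w_nil s : act_w s [::] = [::].
Proof. by elim: s => //. Qed.

Lemma size_act_l l w : size (act_l l w) = size w.
Proof.
elim: w l => [|x v IH] l //=.
by case: (sect_l l x) => [m|] //=; rewrite IH.
Qed.

Lemma size_act_w s w : size (act_w s w) = size w.
Proof. elim: s w => [|l s IH] w //=. by rewrite IH size_act_l. Qed.

Definition flip (l : letter) : letter := (l.1, ~~ l.2).

Lemma flipK : involutive flip.
Proof. by case=> g b; rewrite /flip /= negbK. Qed.

Definition f (k : nat) : X :=
  match k with
  | 1 => @Ordinal 6 1 isT | 2 => @Ordinal 6 2 isT | 3 => @Ordinal 6 3 isT
  | 4 => @Ordinal 6 4 isT | 5 => @Ordinal 6 5 isT | _ => @Ordinal 6 0 isT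
  end.

Lemma lt_f k : lt k = f k.
Proof.
apply: val_inj; rewrite /lt /inord val_insubd.
by case: k => [|[|[|[|[|[|k]]]]]].
Qed.

Ltac crunch :=
  rewrite /=; try unfold perm_l, sect_l, sigma, sigmainv, sect0;
  rewrite /=; repeat (rewrite lt_f /=); try done.

Lemma ordcases (P : X -> Prop) :
  P (f 0) -> P (f 1) -> P (f 2) -> P (f 3) -> P (f 4) -> P (f 5) ->
  forall x, P x.
Proof.
move=> H0 H1 H2 H3 H4 H5 x.
have -> : x = lt x by apply/val_inj; rewrite /= inordK.
rewrite lt_f.
case: x => [[|[|[|[|[|[|k]]]]]] Hk] //.
Qed.

Lemma perm_flip l x : perm_l (flip l) (perm_l l x) = x.
Proof.
case: l => g b; move: x; apply: ordcases; case: g; case: b; crunch.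
Qed.

Lemma sect_flip l x : sect_l (flip l) (perm_l l x) = omap flip (sect_l l x).
Proof.
case: l => g b; move: x; apply: ordcases; case: g; case: b; crunch.
Qed.

Lemma act_flip l w : act_l (flip l) (act_l l w) = w.
Proof.
elim: w l => [|x v IH] l //=.
rewrite perm_flip sect_flip; congr (_ :: _).
by case: (sect_l l x) => [m|] //=; rewrite IH.
Qed.

Definition invw (s : seq letter) := rev (map flip s).

Lemma invwK1 s w : act_w (invw s) (act_w s w) = w.
Proof.
elim: s w => [|l s IH] w //=.
rewrite /invw map_cons rev_cons -cats1 act_w_cat.
by rewrite -/(invw s) IH /= act_flip.
Qed.

Lemma invwK2 s w : act_w s (act_w (invw s) w) = w.
Proof.
have := invwK1 (invw s) w.
by rewrite /invw map_rev revK (mapK flipK).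
Qed.

Definition x0 : X := lt 0.

Lemma aP v : act_l (GA, false) v = act_w [:: (GB, true); (GC, true)] v.
Proof.
case: v => [|x v] //; move: x v; apply: ordcases => v; crunch.
Qed.

Lemma aiP v : act_l (GA, true) v = act_w [:: (GC, false); (GB, false)] v.
Proof.
case: v => [|x v] //; move: x v; apply: ordcases => v; crunch.
Qed.

Definition sb := [:: (GB, false)].
Definition sbi := [:: (GB, true)].
Definition sc := [:: (GC, false); (GB, true); (GB, true); (GA, false); (GC, true)].
Definition sci := [:: (GC, false); (GA, false); (GB, false); (GB, false); (GC, true)].

Definition W (l : letter) : seq letter :=
  match l with
  | (GA, false) => sbi ++ sci
  | (GA, true) => sc ++ sb
  | (GB, false) => sb
  | (GB, true) => sbi
  | (GC, false) => sc
  | (GC, true) => sci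
  end.

Lemma WP l w : act_w (W l) (x0 :: w) = x0 :: act_l l w.
Proof.
rewrite swP0; case: l => [[] []]; rewrite ?aiP ?aP /x0 /W /sc /sb /sbi /sci /sw /=; crunch.
Qed.

Lemma Rec s : exists s', forall w, act_w s' (x0 :: w) = x0 :: act_w s w.
Proof.
elim: s => [|l s [s' IH]]; first by exists [::].
exists (W l ++ s') => w.
by rewrite act_w_cat WP IH.
Qed.

Definition Pw (y : X) : seq letter :=
  nth [::] [:: [::]; [:: (GC, false)]; [:: (GA, false)];
    [:: (GA, false); (GB, false); (GC, true)]; [:: (GA, false); (GB, false)];
    [:: (GC, false); (GB, true)]] y.

Definition Qw (x : X) : seq letter :=
  nth [::] [:: [::]; [:: (GC, true)]; [:: (GA, false)];
    [:: (GA, false); (GB, false); (GC, true)]; [:: (GA, false); (GC, true)];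
    [:: (GB, false); (GC, true)]] x.

Lemma PwP y : (sw (Pw y) (x0, [::])).1 = y.
Proof. move: y; apply: ordcases; rewrite /Pw /x0 /sw /=; crunch. Qed.

Lemma QwP x : (sw (Qw x) (x, [::])).1 = x0.
Proof. move: x; apply: ordcases; rewrite /Qw /x0 /sw /=; crunch. Qed.

Lemma trans1 x y : act_w (Qw x ++ Pw y) [:: x] = [:: y].
Proof.
by rewrite act_w_cat swP0 QwP act_w_nil swP0 PwP act_w_nil.
Qed.

Theorem lemma11p5 : recurrent /\ level_transitive.
Proof.
split.
  split.
    move=> x y; exists (act_w (Qw x ++ Pw y)); split; last exact: trans1.
    by exists (Qw x ++ Pw y).
  exists x0 => h [s Hs].
  have [s' Hs'] := Rec s.
  exists (act_w s'); split; first by exists s'.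
  split; first by rewrite Hs' act_w_nil.
  by move=> v; rewrite /section Hs' /= Hs.
move=> n; elim: n => [|n IH] u v.
  case: u => // _; case: v => // _.
  by exists id; split; [exists [::] | ].
case: u => [|x u'] //; case: v => [|y v'] // [Hu] [Hv].
set q := Qw x; set p := Pw y.
set u1 := act_w (sw q (x, [::])).2 u'.
set r := (sw p (x0, [::])).2.
have Hs1 : size u1 = n by rewrite size_act_w.
have Hs2 : size (act_w (invw r) v') = n by rewrite size_act_w.
have [g [[h Hh] Hg]] := IH u1 (act_w (invw r) v') Hs1 Hs2.
have [h' Hh'] := Rec h.
exists (act_w (q ++ h' ++ p)); split; first by exists (q ++ h' ++ p).
rewrite !act_w_cat swP0 QwP -/u1 Hh' -Hh Hg swP0 PwP -/r.
by rewrite invwK2.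
Qed.
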